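(* Let $P$ be a strange polytope with apices $v_1,v_2$ and base $Q=\mathrm{conv}\{o,v_3,v_4,v_5,v_6\}$. (i) If $\|v_i\|\ge 6.5$ for some $i\in\{3,4,5,6\}$, then $\dfrac{S(P)^3}{V(P)^2}>188$. (ii) If $\|v_i\|\ge 17$ for some $i\in\{3,4,5,6\}$, then $\dfrac{S(P)^3}{V(P)^2}>344$.
   Context: $S$, $V$ denote surface area and volume. Strange polytope: a polytope $P=\mathrm{conv}(Q\cup\{v_1,v_2\})$ where $v_1$ is a unit vector, $v_2=-v_1$, $Q=\mathrm{conv}\{o,v_3,v_4,v_5,v_6\}\subset v_1^\perp$ is a convex polygon ($o$ the origin), and either $Q$ is a triangle, or $o$ lies on the relative boundary of $Q$ and $v_3,v_4,v_5,v_6$ are vertices of both $Q$ and $P$; $v_1,v_2$ are its apices and $Q$ its base. *)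

(* Defs.v *)
From Stdlib Require Import Reals Lra List Arith.
Import ListNotations.
Open Scope R_scope.

Definition vec : Type := (R * R * R)%type.
Definition vx (v : vec) : R := fst (fst v).
Definition vy (v : vec) : R := snd (fst v).
Definition vz (v : vec) : R := snd v.
Definition mkv (a b c : R) : vec := (a, b, c).
Definition vzero : vec := mkv 0 0 0.
Definition vadd (u v : vec) : vec := mkv (vx u + vx v) (vy u + vy v) (vz u + vz v).
Definition vsub (u v : vec) : vec := mkv (vx u - vx v) (vy u - vy v) (vz u - vz v).
Definition vscale (t : R) (v : vec) : vec := mkv (t * vx v) (t * vy v) (t * vz v).
Definition vopp (v : vec) : vec := vscale (-1) v.
Definition dot (u v : vec) : R := vx u * vx v + vy u * vy v + vz u * vz v.
Definition cross (u v : vec) : vec :=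
  mkv (vy u * vz v - vz u * vy v) (vz u * vx v - vx u * vz v) (vx u * vy v - vy u * vx v).
Definition norm (v : vec) : R := sqrt (dot v v).
Definition det3 (a b c : vec) : R := dot a (cross b c).

Fixpoint sumR (l : list R) : R := match l with [] => 0 | x :: l' => x + sumR l' end.

Fixpoint lincomb (ls : list R) (ps : list vec) : vec :=
  match ls, ps with
  | l :: ls', p :: ps' => vadd (vscale l p) (lincomb ls' ps')
  | _, _ => vzero
  end.

Definition conv (ps : list vec) (x : vec) : Prop :=
  exists ls : list R, length ls = length ps /\ Forall (fun l => 0 <= l) ls /\
    sumR ls = 1 /\ x = lincomb ls ps.

Definition extreme_point (X : vec -> Prop) (x : vec) : Prop :=
  X x /\ forall a b t, X a -> X b -> 0 < t < 1 ->
    x = vadd (vscale (1 - t) a) (vscale t b) -> a = x /\ b = x.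

(* relative boundary of a set X whose affine hull is the plane v1^perp *)
Definition rel_boundary_in_plane (v1 : vec) (X : vec -> Prop) (x : vec) : Prop :=
  X x /\ forall eps, 0 < eps -> exists y, dot y v1 = 0 /\ norm (vsub y x) < eps /\ ~ X y.

Definition cyc (L : list vec) (i : nat) : vec := nth (i mod length L) L vzero.

(* L lists the vertices of the convex polygon X (lying in v1^perp), in strictly
   convex counterclockwise order when viewed from v1. *)
Definition vertex_cycle (v1 : vec) (X : vec -> Prop) (L : list vec) : Prop :=
  (3 <= length L)%nat /\ Forall (fun w => dot w v1 = 0) L /\
  (forall i j, (i < length L)%nat -> (j < length L)%nat -> j <> i ->
     j <> (S i) mod length L ->
     0 < det3 (vsub (cyc L (S i)) (cyc L i)) (vsub (cyc L j) (cyc L i)) v1) /\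
  (forall x, X x <-> conv L x).

Definition tri_area (a b c : vec) : R := / 2 * norm (cross (vsub b a) (vsub c a)).

(* Surface area of the bipyramid conv(Q ∪ {v1, -v1}) where Q has vertex cycle L:
   its facets are the triangles conv{w_i, w_(i+1), ±v1}. *)
Definition bipyr_surface (v1 : vec) (L : list vec) : R :=
  sumR (map (fun i => tri_area (cyc L i) (cyc L (S i)) v1
                    + tri_area (cyc L i) (cyc L (S i)) (vopp v1))
            (seq 0 (length L))).

(* Volume of the same bipyramid, triangulated from the origin o ∈ Q into the
   tetrahedra conv{o, w_i, w_(i+1), ±v1}. *)
Definition bipyr_volume (v1 : vec) (L : list vec) : R :=
  sumR (map (fun i => (Rabs (det3 (cyc L i) (cyc L (S i)) v1)
                     + Rabs (det3 (cyc L i) (cyc L (S i)) (vopp v1))) / 6)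
            (seq 0 (length L))).

Definition baseQ (v3 v4 v5 v6 : vec) : vec -> Prop := conv [vzero; v3; v4; v5; v6].
Definition polyP (v1 v3 v4 v5 v6 : vec) : vec -> Prop :=
  conv [v1; vopp v1; vzero; v3; v4; v5; v6].

(* P = conv(Q ∪ {v1, v2}) is a strange polytope with apices v1, v2 = -v1 *)
Definition strange_polytope (v1 v3 v4 v5 v6 : vec) : Prop :=
  norm v1 = 1 /\
  dot v3 v1 = 0 /\ dot v4 v1 = 0 /\ dot v5 v1 = 0 /\ dot v6 v1 = 0 /\
  (exists L, vertex_cycle v1 (baseQ v3 v4 v5 v6) L) /\
  (
    (exists a b c, cross (vsub b a) (vsub c a) <> vzero /\
        forall x, baseQ v3 v4 v5 v6 x <-> conv [a; b; c] x)
  \/ (rel_boundary_in_plane v1 (baseQ v3 v4 v5 v6) vzero /\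
      Forall (fun v => extreme_point (baseQ v3 v4 v5 v6) v /\
                       extreme_point (polyP v1 v3 v4 v5 v6) v) [v3; v4; v5; v6])).

(* Main.v *)
Require Import Defs.
From Stdlib Require Import Reals List Lra Lia Arith.
Import ListNotations.
Open Scope R_scope.

Ltac vunf := unfold det3, dot, cross, vsub, vadd, vscale, vopp, mkv, vzero, vx, vy, vz in *; simpl in *; unfold vx, vy, vz in *; simpl in *.
Ltac vdes := repeat match goal with v : vec |- _ => destruct v as [[? ?] ?] end.

Lemma mk_eq (a b c a' b' c' : R) : a = a' -> b = b' -> c = c' -> (a, b, c) = (a', b', c').
Proof. intros; subst; reflexivity. Qed.
Ltac veq := vdes; vunf; apply mk_eq; ring.
Ltac rid := vdes; vunf; ring.

Lemma dot_ge0 v : 0 <= dot v v.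
Proof. vdes; vunf; nra. Qed.

Lemma lagrange x y : dot (cross x y) (cross x y) = dot x x * dot y y - (dot x y)^2.
Proof. rid. Qed.

Lemma sqrt_le_of_sq x y : 0 <= y -> x <= y^2 -> sqrt x <= y.
Proof. intros. rewrite <- (sqrt_pow2 y) by lra. apply sqrt_le_1_alt; lra. Qed.

Lemma le_sqrt_prod x X Y : 0 <= X -> 0 <= Y -> x^2 <= X * Y -> x <= sqrt X * sqrt Y.
Proof.
  intros. rewrite <- sqrt_mult by lra.
  destruct (Rle_dec x 0). pose proof (sqrt_pos (X*Y)); lra.
  rewrite <- (sqrt_pow2 x) by lra. apply sqrt_le_1_alt; lra.
Qed.

Lemma norm_ge0 v : 0 <= norm v.
Proof. apply sqrt_pos. Qed.

Lemma norm_sq v : norm v ^ 2 = dot v v.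
Proof. unfold norm. apply pow2_sqrt, dot_ge0. Qed.

Lemma cauchy u v : dot u v <= norm u * norm v.
Proof.
  apply le_sqrt_prod; try apply dot_ge0.
  pose proof (lagrange u v). pose proof (dot_ge0 (cross u v)). lra.
Qed.

Lemma norm_tri u v : norm (vadd u v) <= norm u + norm v.
Proof.
  unfold norm at 1. apply sqrt_le_of_sq.
  pose proof (norm_ge0 u); pose proof (norm_ge0 v); lra.
  pose proof (cauchy u v). pose proof (norm_sq u). pose proof (norm_sq v).
  assert (dot (vadd u v) (vadd u v) = dot u u + dot v v + 2 * dot u v) by rid.
  nra.
Qed.

Lemma norm_scale t v : norm (vscale t v) = Rabs t * norm v.
Proof.
  unfold norm. assert (dot (vscale t v) (vscale t v) = t^2 * dot v v) by rid.
  rewrite H, sqrt_mult, <- pow2_abs, sqrt_pow2; try (apply pow2_ge_0 || apply Rabs_pos || apply dot_ge0). reflexivity.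
Qed.

Lemma norm_sym a b : norm (vsub a b) = norm (vsub b a).
Proof. unfold norm. f_equal. rid. Qed.

Lemma norm_sub0 v : norm (vsub v vzero) = norm v.
Proof. unfold norm. f_equal. rid. Qed.

Lemma norm_self a : norm (vsub a a) = 0.
Proof. unfold norm. replace (dot (vsub a a) (vsub a a)) with 0 by rid. apply sqrt_0. Qed.

Lemma norm_chain x y z : norm (vsub x z) <= norm (vsub x y) + norm (vsub y z).
Proof. replace (vsub x z) with (vadd (vsub x y) (vsub y z)) by veq. apply norm_tri. Qed.

Lemma sumR_app l1 l2 : sumR (l1 ++ l2) = sumR l1 + sumR l2.
Proof. induction l1; simpl; lra. Qed.

Lemma sumR_le {A} (f g : A -> R) l : (forall x, In x l -> f x <= g x) -> sumR (map f l) <= sumR (map g l).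
Proof. induction l; simpl; intros; [lra|]. pose proof (H a (or_introl eq_refl)). assert (sumR (map f l) <= sumR (map g l)) by auto. lra. Qed.

Lemma sumR_ext {A} (f g : A -> R) l : (forall x, In x l -> f x = g x) -> sumR (map f l) = sumR (map g l).
Proof. intros. apply Rle_antisym; apply sumR_le; intros; rewrite H; auto; lra. Qed.

Lemma sumR_add {A} (f g : A -> R) l : sumR (map (fun x => f x + g x) l) = sumR (map f l) + sumR (map g l).
Proof. induction l; simpl; lra. Qed.

Lemma sumR_scale {A} (f : A -> R) c l : sumR (map (fun x => f x / c) l) = sumR (map f l) / c.
Proof. induction l; simpl. unfold Rdiv; ring. rewrite IHl. unfold Rdiv; ring. Qed.

Lemma sumR_ge_In {A} (f : A -> R) l x : (forall y, In y l -> 0 <= f y) -> In x l -> f x <= sumR (map f l).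
Proof.
  induction l; simpl; intros; [contradiction|].
  destruct H0 as [<-|H0].
  - assert (0 <= sumR (map f l)). { clear -H. induction l; simpl in *. lra. pose proof (H a0 (or_intror (or_introl eq_refl))). assert (0 <= sumR (map f l)) by (apply IHl; intros; apply H; tauto). lra. }
    lra.
  - pose proof (H a (or_introl eq_refl)). assert (f x <= sumR (map f l)) by auto. lra.
Qed.

Lemma telescope (h : nat -> R) n : sumR (map (fun i => h (S i) - h i) (seq 0 n)) = h n - h 0%nat.
Proof. induction n. simpl; lra. rewrite seq_S, map_app, sumR_app, IHn. simpl. lra. Qed.

Lemma minkowski {A} (f g : A -> R) l :
  sqrt ((sumR (map f l))^2 + (sumR (map g l))^2) <= sumR (map (fun x => sqrt (f x ^2 + g x ^2)) l).
Proof.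
  induction l; cbn [map sumR].
  - apply sqrt_le_of_sq; nra.
  - set (F := sumR (map f l)) in *. set (G := sumR (map g l)) in *.
    assert (sqrt ((f a + F)^2 + (g a + G)^2) <= sqrt (f a ^2 + g a^2) + sqrt (F^2+G^2)).
    { apply sqrt_le_of_sq. pose proof (sqrt_pos (f a ^2 + g a^2)); pose proof (sqrt_pos (F^2+G^2)); lra.
      assert (f a * F + g a * G <= sqrt (f a ^2 + g a^2) * sqrt (F^2+G^2)).
      { pose proof (pow2_ge_0 (f a * G - g a * F)). apply le_sqrt_prod; nra. }
      replace ((sqrt (f a ^ 2 + g a ^ 2) + sqrt (F ^ 2 + G ^ 2)) ^ 2) with
        (sqrt (f a ^ 2 + g a ^ 2) ^2 + sqrt (F ^ 2 + G ^ 2) ^ 2 + 2 * (sqrt (f a ^ 2 + g a ^ 2) * sqrt (F ^ 2 + G ^ 2))) by ring.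
      rewrite !pow2_sqrt by nra. nra. }
    lra.
Qed.

Lemma cross_dot_id a b v :
  dot a v = 0 -> dot b v = 0 -> dot v v = 1 ->
  dot (cross (vsub b a) (vsub v a)) (cross (vsub b a) (vsub v a)) =
  dot (vsub b a) (vsub b a) + (det3 a b v)^2.
Proof.
  intros ha hb hv.
  rewrite lagrange.
  assert (E1 : dot (vsub v a) (vsub v a) = dot v v - 2 * dot a v + dot a a) by rid.
  assert (E2 : dot (vsub b a) (vsub v a) = dot b v - dot a v - dot (vsub b a) a) by rid.
  pose proof (lagrange (vsub b a) a) as E3.
  assert (E4 : dot (cross (vsub b a) a) (cross (vsub b a) a) = dot (cross a b) (cross a b)) by rid.
  pose proof (lagrange (cross a b) v) as E5.
  assert (E6 : cross (cross a b) v = vsub (vscale (dot a v) b) (vscale (dot b v) a)) by veq.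
  assert (E7 : det3 a b v = dot (cross a b) v) by rid.
  rewrite ha, hb in E6.
  assert (E8 : dot (cross (cross a b) v) (cross (cross a b) v) = 0) by (rewrite E6; rid).
  rewrite E1, E2, ha, hb, hv, E7. 
  rewrite hv in E5.
  set (U := dot (vsub b a) (vsub b a)) in *.
  set (A := dot a a) in *. set (ua := dot (vsub b a) a) in *.
  set (X := dot (cross a b) (cross a b)) in *.
  assert (X = (dot (cross a b) v)^2) by lra.
  assert (U * A - ua^2 = X) by lra.
  nra.
Qed.

Lemma tri_area_eq a b v :
  dot a v = 0 -> dot b v = 0 -> dot v v = 1 ->
  tri_area a b v = / 2 * sqrt (norm (vsub b a) ^ 2 + (det3 a b v)^2).
Proof.
  intros. unfold tri_area. f_equal. unfold norm at 1. f_equal.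
  rewrite norm_sq. apply cross_dot_id; auto.
Qed.

Lemma tri_pair a b v :
  dot a v = 0 -> dot b v = 0 -> dot v v = 1 ->
  tri_area a b v + tri_area a b (vopp v) = sqrt (norm (vsub b a) ^ 2 + (det3 a b v)^2).
Proof.
  intros.
  assert (dot a (vopp v) = - dot a v) by rid.
  assert (dot b (vopp v) = - dot b v) by rid.
  assert (dot (vopp v) (vopp v) = dot v v) by rid.
  assert (det3 a b (vopp v) = - det3 a b v) by rid.
  rewrite !tri_area_eq; try lra. rewrite H5.
  replace ((- det3 a b v)^2) with ((det3 a b v)^2) by ring. field.
Qed.

Lemma det_opp a b v : Rabs (det3 a b (vopp v)) = Rabs (det3 a b v).
Proof. replace (det3 a b (vopp v)) with (- det3 a b v) by rid. apply Rabs_Ropp. Qed.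

Lemma norm_lincomb ls ps c M :
  length ls = length ps -> Forall (fun l => 0 <= l) ls ->
  (forall w, In w ps -> norm (vsub w c) <= M) ->
  norm (vsub (lincomb ls ps) (vscale (sumR ls) c)) <= sumR ls * M.
Proof.
  revert ls. induction ps as [|p ps IH]; intros ls hlen hnn hM; destruct ls as [|l ls]; simpl in hlen; try discriminate.
  - simpl. replace (vsub vzero (vscale 0 c)) with (vsub vzero vzero) by veq. rewrite norm_self. lra.
  - inversion hnn; subst. cbn [lincomb sumR].
    replace (vsub (vadd (vscale l p) (lincomb ls ps)) (vscale (l + sumR ls) c))
      with (vadd (vscale l (vsub p c)) (vsub (lincomb ls ps) (vscale (sumR ls) c))) by veq.
    eapply Rle_trans. apply norm_tri. rewrite norm_scale, Rabs_pos_eq by auto.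
    pose proof (hM p (or_introl eq_refl)).
    assert (norm (vsub (lincomb ls ps) (vscale (sumR ls) c)) <= sumR ls * M).
    { apply IH; auto. intros; apply hM; simpl; auto. }
    nra.
Qed.

Lemma conv_dist ps x c M : conv ps x -> (forall w, In w ps -> norm (vsub w c) <= M) ->
  norm (vsub x c) <= M.
Proof.
  intros [ls [h1 [h2 [h3 h4]]]] hM. subst x.
  pose proof (norm_lincomb ls ps c M h1 h2 hM). rewrite h3 in H.
  replace (vscale 1 c) with c in H by veq. lra.
Qed.

Lemma lincomb_zeros ps : lincomb (map (fun _ => 0) ps) ps = vzero.
Proof. induction ps; simpl; auto. rewrite IHps. veq. Qed.

Lemma conv_In ps x : In x ps -> conv ps x.
Proof.
  induction ps as [|a ps IH]; simpl; intros H; [contradiction|].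
  destruct H as [<-|H].
  - exists (1 :: map (fun _ => 0) ps). split; [simpl; rewrite length_map; auto|].
    split. constructor. lra. apply Forall_forall; intros y hy. apply in_map_iff in hy. destruct hy as [? [<- _]]; lra.
    split. simpl. clear. induction ps; simpl in *; lra.
    simpl. rewrite lincomb_zeros. veq.
  - destruct (IH H) as [ls [h1 [h2 [h3 h4]]]].
    exists (0 :: ls). split; [simpl; auto|]. split. constructor; auto; lra.
    split. simpl; lra. simpl. rewrite <- h4. veq.
Qed.

Lemma cyc_In L i : (0 < length L)%nat -> In (cyc L i) L.
Proof. intros. unfold cyc. apply nth_In. apply Nat.mod_upper_bound. lia. Qed.

Lemma cyc_n L : (0 < length L)%nat -> cyc L (length L) = cyc L 0.
Proof. intros. unfold cyc. rewrite Nat.Div0.mod_same, Nat.Div0.mod_0_l. reflexivity. Qed.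

Lemma cyc_small L i : (i < length L)%nat -> cyc L i = nth i L vzero.
Proof. intros. unfold cyc. rewrite Nat.mod_small; auto. Qed.

Definition ll L i := norm (vsub (cyc L (S i)) (cyc L i)).

Lemma path L m a : norm (vsub (cyc L (a + m)) (cyc L a)) <= sumR (map (ll L) (seq a m)).
Proof.
  induction m.
  - rewrite Nat.add_0_r, norm_self. simpl; lra.
  - rewrite seq_S, map_app, sumR_app. simpl.
    eapply Rle_trans. apply (norm_chain _ (cyc L (a + m))).
    rewrite Nat.add_succ_r. unfold ll at 2. lra.
Qed.

Lemma perim L i j : (0 < length L)%nat -> (i <= j <= length L)%nat ->
  2 * norm (vsub (cyc L j) (cyc L i)) <= sumR (map (ll L) (seq 0 (length L))).
Proof.
  intros hn hij.
  replace (length L) with (i + ((j - i) + (length L - j)))%nat by lia.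
  rewrite !seq_app, !map_app, !sumR_app.
  pose proof (path L i 0). pose proof (path L (j - i) i). pose proof (path L (length L - j) j).
  replace (0 + i)%nat with i in * by lia.
  replace (i + (j - i))%nat with j in * by lia.
  replace (j + (length L - j))%nat with (length L) in * by lia.
  rewrite cyc_n in H1 by auto.
  pose proof (norm_chain (cyc L i) (cyc L 0) (cyc L j)).
  rewrite (norm_sym (cyc L i) (cyc L j)) in H2.
  lra.
Qed.

Lemma perim_in L w w' : (0 < length L)%nat -> In w L -> In w' L ->
  2 * norm (vsub w w') <= sumR (map (ll L) (seq 0 (length L))).
Proof.
  intros hn h1 h2.
  destruct (In_nth L w vzero h1) as [k [hk <-]].
  destruct (In_nth L w' vzero h2) as [k' [hk' <-]].
  rewrite <- !cyc_small by auto.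
  destruct (Nat.le_ge_cases k' k).
  - apply perim; lia.
  - rewrite norm_sym. apply perim; lia.
Qed.

Lemma perim_conv L x : (0 < length L)%nat -> conv L vzero -> conv L x ->
  2 * norm x <= sumR (map (ll L) (seq 0 (length L))).
Proof.
  intros hn h0 hx. set (p := sumR _).
  assert (forall w, In w L -> norm (vsub w vzero) <= p / 2).
  { intros w hw. rewrite norm_sym. apply (conv_dist L vzero w); auto.
    intros w' hw'. pose proof (perim_in L w' w hn hw' hw). fold p in H. lra. }
  pose proof (conv_dist L x vzero (p/2) hx H). rewrite norm_sub0 in H0. lra.
Qed.

Definition dd L v1 i := det3 (cyc L i) (cyc L (S i)) v1.

Lemma det_decomp a b c v : det3 a b v = det3 (vsub a c) (vsub b c) v + (det3 c b v - det3 c a v).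
Proof. rid. Qed.
Lemma det_z1 c b v : det3 (vsub c c) b v = 0.
Proof. rid. Qed.
Lemma det_z2 c b v : det3 b (vsub c c) v = 0.
Proof. rid. Qed.
Lemma det_sw a b c v : det3 (vsub b a) (vsub c a) v = det3 (vsub a c) (vsub b c) v.
Proof. rid. Qed.

Lemma area_pos v1 X L : vertex_cycle v1 X L -> 0 < sumR (map (dd L v1) (seq 0 (length L))).
Proof.
  intros [hn [_ [hc _]]].
  set (n := length L) in *.
  set (c := cyc L 0).
  set (g := fun i => det3 (vsub (cyc L i) c) (vsub (cyc L (S i)) c) v1).
  set (h := fun i => det3 c (cyc L i) v1).
  rewrite (sumR_ext _ (fun i => g i + (h (S i) - h i))).
  2:{ intros i _. unfold dd, g, h. apply det_decomp. }
  rewrite sumR_add, telescope.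
  assert (h n = h 0%nat). { unfold h. unfold n. rewrite cyc_n by lia. reflexivity. }
  assert (gpos : forall i, In i (seq 0 n) -> 0 <= g i).
  { intros i hi. apply in_seq in hi.
    destruct (Nat.eq_dec i 0). subst i. unfold g. rewrite det_z1. lra.
    destruct (Nat.eq_dec (S i) n). unfold g. rewrite e. unfold n. rewrite cyc_n by lia. fold c. rewrite det_z2. lra.
    unfold g, c. rewrite <- det_sw. left. apply hc; try lia. fold n. rewrite Nat.mod_small; lia. }
  assert (0 < g 1%nat).
  { unfold g, c. rewrite <- det_sw. apply hc; try lia. fold n. rewrite Nat.mod_small; lia. }
  pose proof (sumR_ge_In g (seq 0 n) 1%nat gpos). 
  assert (In 1%nat (seq 0 n)) by (apply in_seq; lia).
  specialize (H1 H2). lra.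
Qed.

Lemma core v1 X L v : dot v1 v1 = 1 -> vertex_cycle v1 X L -> X vzero -> X v ->
  exists p D, 2 * norm v <= p /\ 0 < D /\ sqrt (p^2 + D^2) <= bipyr_surface v1 L /\
     bipyr_volume v1 L = D / 3.
Proof.
  intros hv hvc h0 hxv.
  pose proof (area_pos v1 X L hvc).
  destruct hvc as [hn [hf [hc hX]]].
  assert (hw : forall i, dot (cyc L i) v1 = 0).
  { intros i. rewrite Forall_forall in hf. apply hf, cyc_In. lia. }
  exists (sumR (map (ll L) (seq 0 (length L)))).
  exists (sumR (map (fun i => Rabs (dd L v1 i)) (seq 0 (length L)))).
  split; [apply perim_conv; try lia; apply hX; auto|].
  split.
  { eapply Rlt_le_trans. apply H. apply sumR_le. intros; apply Rle_abs. }
  split.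
  - unfold bipyr_surface.
    eapply Rle_trans; [apply minkowski|]. right. apply sumR_ext.
    intros i _. rewrite tri_pair; auto. unfold ll, dd. rewrite pow2_abs. reflexivity.
  - unfold bipyr_volume. rewrite <- sumR_scale. apply sumR_ext. intros i _.
    rewrite det_opp. unfold dd. field.
Qed.

Theorem mainTheorem9 (v1 v3 v4 v5 v6 : vec) :
  strange_polytope v1 v3 v4 v5 v6 ->
  forall L : list vec, vertex_cycle v1 (baseQ v3 v4 v5 v6) L ->
  (Exists (fun v => 13 / 2 <= norm v) [v3; v4; v5; v6] ->
     bipyr_surface v1 L ^ 3 / bipyr_volume v1 L ^ 2 > 188) /\
  (Exists (fun v => 17 <= norm v) [v3; v4; v5; v6] ->
     bipyr_surface v1 L ^ 3 / bipyr_volume v1 L ^ 2 > 344).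
Proof.
  intros [hn1 _] L hvc.
  assert (hv : dot v1 v1 = 1).
  { rewrite <- (norm_sq v1), hn1. ring. }
  assert (h0 : baseQ v3 v4 v5 v6 vzero) by (apply conv_In; simpl; auto).
  assert (key : forall v (K c : R), In v [v3; v4; v5; v6] -> K <= norm v -> 0 < c ->
     c < 36 * K -> bipyr_surface v1 L ^ 3 / bipyr_volume v1 L ^ 2 > c).
  { intros v K c hin hK hc hcK.
    assert (hQ : baseQ v3 v4 v5 v6 v) by (apply conv_In; simpl; tauto).
    destruct (core v1 _ L v hv hvc h0 hQ) as [p [D [hp [hD [hS hV]]]]].
    rewrite hV. set (S := bipyr_surface v1 L) in *.
    set (s := sqrt (p^2 + D^2)) in *.
    assert (hs2 : s^2 = p^2 + D^2) by (apply pow2_sqrt; nra).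
    assert (hs0 : 0 <= s) by apply sqrt_pos.
    assert (s >= D).
    { apply Rle_ge. rewrite <- (sqrt_pow2 D) by lra. apply sqrt_le_1_alt. pose proof (pow2_ge_0 p). lra. }
    assert (s^2 >= 2 * p * D) by (pose proof (pow2_ge_0 (p - D)); nra).
    pose proof (norm_ge0 v).
    assert (s^3 >= 2 * p * D * D).
    { replace (s^3) with (s^2 * s) by ring. apply Rle_ge. apply Rmult_le_compat; nra. }
    assert (S^3 >= s^3) by (apply Rle_ge, pow_incr; lra).
    apply Rlt_gt. apply Rmult_lt_reg_r with ((D/3)^2). nra.
    replace (S ^ 3 / (D / 3) ^ 2 * (D / 3) ^ 2) with (S^3) by (field; lra).
    assert (0 < D^2) by nra. nra. }
  split; intros hE; apply Exists_exists in hE; destruct hE as [v [hin hK]].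
  - apply (key v (13/2)); auto; lra.
  - apply (key v 17); auto; lra.
Qed.
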